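(* If $\mathfrak R$ is the Sierpiński gasket iterated graph system, then for all $m\in\mathbb N$ and $i,j\in\{0,1,2\}$, \[ d_{G_m}(i^m,j^m)\le 2^m-1. \] If $\mathfrak R$ is the pentagonal Sierpiński carpet iterated graph system, then for all $m\in\mathbb N$ and $i,j\in\{0,1,2,3,4\}$, \[ d_{G_m}(i^m,j^m)\le 2^{m+1}-1. \] Here $i^m\in W_m$ denotes the word consisting of the symbol $i$ repeated $m$ times.
   Context: Graphs: $(V,E)$, $V$ finite non-empty, $E\subseteq V\times V$, $(x,y)\in E\Rightarrow(y,x)\notin E$; $d_G$ is the shortest-path metric in the underlying undirected graph. An iterated graph system consists of a connected graph $G_1=(S,E)$, a finite set $\mathcal T$ of types, a surjective typing $\mathfrak t:E\to\mathcal T$ and non-empty gluing rules $I_t\subseteq S\times S$. With $W_m=S^m$, $[w]_k=w_1\cdots w_k$, the replacement graphs $G_m=(W_m,E_m)$ are defined recursively: $(w,v)\in E_{m+1}$ iff either (1) $[w]_m=[v]_m$ and $(w_{m+1},v_{m+1})\in E$ (type $\mathfrak t(w_{m+1},v_{m+1})$), or (2) $([w]_m,[v]_m)\in E_m$ and $(w_{m+1},v_{m+1})\in I_{\mathfrak t([w]_m,[v]_m)}$ (type $\mathfrak t([w]_m,[v]_m)$). Sierpiński gasket: $S=\{0,1,2\}$, $E=\{(0,1),(1,2),(0,2)\}$ of types $a,b,c$ respectively, $I_a=\{(1,0)\}$, $I_b=\{(2,1)\}$, $I_c=\{(2,0)\}$. Pentagonal Sierpiński carpet: $S=\{0,1,2,3,4\}$,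 $E=\{(0,1),(1,2),(2,3),(3,4),(4,0)\}$ of types $a,b,c,d,e$ respectively, $I_a=\{(1,0),(2,4)\}$, $I_b=\{(2,1),(3,0)\}$, $I_c=\{(3,2),(4,1)\}$, $I_d=\{(4,3),(0,2)\}$, $I_e=\{(0,4),(1,3)\}$. *)

(* Defs.v *)
From mathcomp Require Import all_boot.
Set Implicit Arguments. Unset Strict Implicit. Unset Printing Implicit Defensive.

(* S : alphabet (vertex set of G_1), T : types.
   typE a b = Some t  iff (a,b) is an edge of G_1 of type t; None otherwise.
   glue t : the gluing rule I_t, as a boolean relation on S.
   Words w in W_m = S^m are sequences of length m, w = w_1 ... w_m. *)
Section IGS.
Variables (S T : eqType) (typE : S -> S -> option T) (glue : T -> rel S).

(* Type of the (directed) edge (w,v) of G_m, given the REVERSED words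
   rw = rev w, rv = rev v (so the head is the last letter w_m).
   Some t iff (w,v) in E_m with type t.  The base case (empty words) is the
   one-vertex graph G_0 without edges, from which rule (1) yields exactly
   G_1 = (S,E) with its typing; for m+1 the two rules of the paper:
   (1) [w]_m = [v]_m and (w_{m+1},v_{m+1}) in E, type t(w_{m+1},v_{m+1});
   (2) ([w]_m,[v]_m) in E_m of type t and (w_{m+1},v_{m+1}) in I_t, type t. *)
Fixpoint etype_rev (rw rv : seq S) : option T :=
  match rw, rv with
  | a :: rw', b :: rv' =>
      match (if rw' == rv' then typE a b else None) with
      | Some t => Some t
      | None =>
          match etype_rev rw' rv' with
          | Some t => if glue t a b then Some t else None
          | None => None
          end
      end
  | _, _ => None
  end.

Definition etype (w v : seq S) : option T := etype_rev (rev w) (rev v).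

Definition igs_edge (m : nat) (w v : seq S) : bool :=
  [&& size w == m, size v == m & etype w v != None].

Definition igs_adj (m : nat) : rel (seq S) :=
  fun w v => igs_edge m w v || igs_edge m v w.

(* d_{G_m}(x,y) <= k : there is a path in the underlying undirected graph
   of G_m from x to y with at most k edges. *)
Definition igs_dist_le (m : nat) (x y : seq S) (k : nat) : Prop :=
  exists p : seq (seq S),
    [/\ path (igs_adj m) x p, last x p = y & size p <= k].

End IGS.

(* Sierpinski gasket: S = {0,1,2}, types a,b,c encoded as 0,1,2. *)
Definition gasket_typ (x y : 'I_3) : option nat :=
  match val x, val y with
  | 0, 1 => Some 0
  | 1, 2 => Some 1
  | 0, 2 => Some 2
  | _, _ => None
  end.

Definition gasket_glue (t : nat) (x y : 'I_3) : bool :=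
  match t with
  | 0 => (val x == 1) && (val y == 0)
  | 1 => (val x == 2) && (val y == 1)
  | 2 => (val x == 2) && (val y == 0)
  | _ => false
  end.

(* Pentagonal Sierpinski carpet: S = {0,...,4}, types a..e encoded as 0..4. *)
Definition pent_typ (x y : 'I_5) : option nat :=
  match val x, val y with
  | 0, 1 => Some 0
  | 1, 2 => Some 1
  | 2, 3 => Some 2
  | 3, 4 => Some 3
  | 4, 0 => Some 4
  | _, _ => None
  end.

Definition pent_glue (t : nat) (x y : 'I_5) : bool :=
  let p := (val x, val y) in
  match t with
  | 0 => (p == (1, 0)) || (p == (2, 4))
  | 1 => (p == (2, 1)) || (p == (3, 0))
  | 2 => (p == (3, 2)) || (p == (4, 1))
  | 3 => (p == (4, 3)) || (p == (0, 2))
  | 4 => (p == (0, 4)) || (p == (1, 3))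
  | _ => false
  end.

(* Main.v *)
Require Import Defs.
From mathcomp Require Import all_boot.
From mathcomp Require Import zify.

Section Gen.
Variables (S T : eqType) (typE : S -> S -> option T) (glue : T -> rel S).
Hypothesis irr : forall x, typE x x = None.

Lemma etype_rcons i : forall rw rv, size rw = size rv ->
  etype_rev typE glue (rcons rw i) (rcons rv i) = etype_rev typE glue rw rv.
Proof.
elim => [|a rw IH] [|b rv] //=; first by rewrite irr.
by move=> [Hs]; rewrite eqseq_rcons eqxx andbT IH.
Qed.

Lemma adj_lift m i w v : igs_adj typE glue m w v -> igs_adj typE glue m.+1 (i::w) (i::v).
Proof.
rewrite /igs_adj /igs_edge /etype /= !rev_cons !eqSS.
by case/orP => /and3P [/eqP Hw /eqP Hv H]; apply/orP; [left|right];
  rewrite Hw Hv !eqxx /= etype_rcons // !size_rev ?Hw ?Hv.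
Qed.

Lemma path_lift m i x p : path (igs_adj typE glue m) x p ->
  path (igs_adj typE glue m.+1) (i::x) (map (cons i) p).
Proof.
elim: p x => [|z p IH] x //= /andP [H1 H2].
by rewrite adj_lift // IH.
Qed.

Lemma dist_lift m i x y k : igs_dist_le typE glue m x y k ->
  igs_dist_le typE glue m.+1 (i::x) (i::y) k.
Proof.
case=> p [Hp Hl Hs]; exists (map (cons i) p); split.
- exact: path_lift.
- by rewrite last_map Hl.
- by rewrite size_map.
Qed.

Lemma dist_refl m x k : igs_dist_le typE glue m x x k.
Proof. by exists [::]. Qed.

Lemma dist_trans m x y z k1 k2 : igs_dist_le typE glue m x y k1 ->
  igs_dist_le typE glue m y z k2 -> igs_dist_le typE glue m x z (k1 + k2).
Proof.
case=> p1 [H1 L1 S1]; case=> p2 [H2 L2 S2]; exists (p1 ++ p2); split.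
- by rewrite cat_path H1 L1 H2.
- by rewrite last_cat L1.
- by rewrite size_cat leq_add.
Qed.

Lemma dist_mono m x y k k' : k <= k' -> igs_dist_le typE glue m x y k ->
  igs_dist_le typE glue m x y k'.
Proof. by move=> Hk [p [H1 H2 H3]]; exists p; split => //; apply: leq_trans Hk. Qed.

Lemma dist_edge m x y : igs_adj typE glue m x y -> igs_dist_le typE glue m x y 1.
Proof. by move=> H; exists [:: y]; rewrite /= H. Qed.

Lemma dist_sym m x y k : igs_dist_le typE glue m x y k -> igs_dist_le typE glue m y x k.
Proof.
case=> p [Hp <- Hs]; elim: p x Hp k Hs => [|z p IH] x /= Hp k Hs.
  exact: dist_refl.
case/andP: Hp => Hxz Hp.
have -> : k = (k - 1) + 1 by move: Hs; lia.
apply: dist_trans; first by apply: IH => //; move: Hs; lia.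
by apply: dist_edge; rewrite /igs_adj orbC.
Qed.

Lemma cross i j t : typE i j = Some t -> glue t j i -> forall m,
  etype typE glue (i :: nseq m j) (j :: nseq m i) = Some t.
Proof.
move=> Hij Hg; have ne : i != j by apply/eqP => E; move: Hij; rewrite E irr.
elim => [|m IH]; first by rewrite /etype /= Hij.
move: IH; rewrite /etype /= !rev_cons !rev_nseq /= => IH.
have R x : rcons (nseq m x) x = x :: nseq m x by elim: m {IH} => //= n ->.
rewrite !R /=.
have -> : (rcons (nseq m j) i == rcons (nseq m i) j) = false.
  by rewrite eqseq_rcons (negbTE ne) andbF.
by rewrite IH Hg.
Qed.

Lemma adj_main i j t : typE i j = Some t -> glue t j i -> forall m,
  igs_dist_le typE glue m.+1 (nseq m.+1 i) (nseq m.+1 j) (2 ^ m.+1 - 1).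
Proof.
move=> Hij Hg; elim => [|m IH].
  apply: dist_edge; by rewrite /igs_adj /igs_edge /= /etype /= Hij.
have E : 2 ^ m.+2 - 1 = (2 ^ m.+1 - 1 + 1) + (2 ^ m.+1 - 1).
  rewrite (expnS 2 m.+1); have := expn_gt0 2 m.+1; lia.
rewrite E; apply: dist_trans; last first.
  by rewrite [nseq m.+2 j]/=; apply: dist_lift; exact: IH.
apply: dist_trans; first by rewrite [nseq m.+2 i]/=; apply: dist_lift; exact: IH.
apply: dist_edge; rewrite /igs_adj /igs_edge /= !size_nseq !eqxx /=.
by rewrite -[[:: j & nseq m j]]/(nseq m.+1 j) -[[:: i & nseq m i]]/(nseq m.+1 i) (cross _ _ _ Hij Hg).
Qed.

End Gen.

Lemma irr_g (x : 'I_3) : gasket_typ x x = None.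
Proof. by case: x => [[|[|[|?]]] ?]. Qed.
Lemma irr_p (x : 'I_5) : pent_typ x x = None.
Proof. by case: x => [[|[|[|[|[|?]]]]] ?]. Qed.

Ltac adjg irr := first
  [ eapply adj_main; [exact irr | reflexivity | reflexivity]
  | apply: dist_sym; eapply adj_main; [exact irr | reflexivity | reflexivity] ].

Lemma pent_adj m (i j : 'I_5) : i != j ->
  (i.+1 %% 5 == j) || (j.+1 %% 5 == i) ->
  igs_dist_le pent_typ pent_glue m.+1 (nseq m.+1 i) (nseq m.+1 j) (2 ^ m.+1 - 1).
Proof.
case: i => [[|[|[|[|[|?]]]]] Hi] //; case: j => [[|[|[|[|[|?]]]]] Hj] // H1 H2;
  first [adjg irr_p | by move: H1 H2].
Qed.

Theorem lemma5p18 :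
  (forall (m : nat) (i j : 'I_3), 1 <= m ->
     igs_dist_le gasket_typ gasket_glue m (nseq m i) (nseq m j) (2 ^ m - 1))
  /\
  (forall (m : nat) (i j : 'I_5), 1 <= m ->
     igs_dist_le pent_typ pent_glue m (nseq m i) (nseq m j) (2 ^ m.+1 - 1)).
Proof.
split=> -[|m] i j // _; (case: (eqVneq i j) => [->|ne]; first exact: dist_refl).
  move: ne; case: i => [[|[|[|?]]] Hi] //; case: j => [[|[|[|?]]] Hj] //= _;
    adjg irr_g.
have B : (2 ^ m.+1 - 1) + (2 ^ m.+1 - 1) <= 2 ^ m.+2 - 1.
  rewrite (expnS 2 m.+1); have := expn_gt0 2 m.+1; lia.
have A (k : 'I_5) : ((i.+1 %% 5 == k) || (k.+1 %% 5 == i)) && ((k.+1 %% 5 == j) || (j.+1 %% 5 == k)) ->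
  igs_dist_le pent_typ pent_glue m.+1 (nseq m.+1 i) (nseq m.+1 j) (2 ^ m.+2 - 1).
  case/andP => H1 H2; apply: (@dist_mono _ _ _ _ _ _ _ _ _ B); apply: (@dist_trans _ _ _ _ _ _ (nseq m.+1 k)).
    apply: pent_adj => //; apply/eqP => E; move: H1; rewrite E.
    by case: (k) => [[|[|[|[|[|?]]]]] ?].
  apply: pent_adj; last by [].
  apply/eqP => E; move: H2; rewrite E; by case: (j) => [[|[|[|[|[|?]]]]] ?].
case/boolP: ((i.+1 %% 5 == j) || (j.+1 %% 5 == i)) => Hadj.
  apply: (@dist_mono _ _ _ _ _ _ _ _ _ _ (@pent_adj m _ _ ne Hadj)); rewrite (expnS 2 m.+1); lia.
move: ne Hadj A; case: i => [[|[|[|[|[|?]]]]] Hi] //; case: j => [[|[|[|[|[|?]]]]] Hj] //= _ _ A.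
- by apply: (A (Ordinal (isT : 1 < 5))).
- by apply: (A (Ordinal (isT : 4 < 5))).
- by apply: (A (Ordinal (isT : 2 < 5))).
- by apply: (A (Ordinal (isT : 0 < 5))).
- by apply: (A (Ordinal (isT : 1 < 5))).
- by apply: (A (Ordinal (isT : 3 < 5))).
- by apply: (A (Ordinal (isT : 4 < 5))).
- by apply: (A (Ordinal (isT : 2 < 5))).
- by apply: (A (Ordinal (isT : 0 < 5))).
- by apply: (A (Ordinal (isT : 3 < 5))).
Qed.
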